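(* Let $\mu$ be an algebraically constant differential $3$-form on an $n$-dimensional manifold $M$ whose algebraic type has the following property: every element of the isotropy Lie algebra $\mathfrak{h}=\{A\in\mathfrak{gl}(V):A\mu=0\}$ (for $\mu$ viewed as a form on $V=T_xM$) is skew-adjoint relative to some pseudo-Euclidean inner product in $V$. Then the mapping $\nabla\mapsto\nabla\mu$, from the affine space of all torsion-free connections on $M$ to $(0,4)$ tensor fields, is injective; consequently, even locally, there exists at most one torsion-free connection $\nabla$ on $M$ with $\nabla\mu=0$.
   Context: A differential form is algebraically constant if it has the same algebraic type at all points. For $A\in\mathfrak{gl}(V)$ and an exterior $p$-form $\mu$, $A\mu$ is the derivation action $(A\mu)(v_1,\dots,v_p)=\sum_{i=1}^p\mu(v_1,\dots,Av_i,\dots,v_p)$; $\mathfrak{h}$ is the isotropy Lie algebra of $\mu$ for the natural action of $\mathrm{GL}(V)$. *)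

(* Defs.v *)
From HB Require Import structures.
From mathcomp Require Import all_boot all_order all_algebra.
From mathcomp Require Import all_classical all_reals all_analysis.
Set Implicit Arguments. Unset Strict Implicit. Unset Printing Implicit Defensive.
Import Order.TTheory GRing.Theory Num.Theory.
Import numFieldNormedType.Exports.
Local Open Scope ring_scope.
Local Open Scope classical_set_scope.

(* Coordinates: V = R^n with standard basis e_0..e_{n-1}.
   A (0,3) tensor on V is given by its components  t a b c = t(e_a,e_b,e_c). *)
Definition form3 (R : Type) (n : nat) := 'I_n -> 'I_n -> 'I_n -> R.

Definition alternating3 (R : ringType) (n : nat) (mu : form3 R n) : Prop :=
  (forall a b c, mu a b c = - mu b a c) /\
  (forall a b c, mu a b c = - mu a c b) /\
  (forall a b, mu a a b = 0) /\ (forall a b, mu a b b = 0).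

(* Derivation action of A in gl(V) (A e_j = sum_i A i j e_i):
   (A mu)(v1,v2,v3) = mu(A v1,v2,v3) + mu(v1,A v2,v3) + mu(v1,v2,A v3). *)
Definition gl_act (R : ringType) (n : nat) (A : 'M[R]_n) (mu : form3 R n)
  : form3 R n :=
  fun a b c => \sum_(m < n) (A m a * mu m b c + A m b * mu a m c + A m c * mu a b m).

Definition isotropy (R : ringType) (n : nat) (mu : form3 R n) : 'M[R]_n -> Prop :=
  fun A => gl_act A mu = (fun _ _ _ => 0).

Definition pseudo_euclidean (R : comUnitRingType) (n : nat) (G : 'M[R]_n) : Prop :=
  G^T = G /\ G \in unitmx.

(* A is skew-adjoint w.r.t. G : <Av,w> = - <v,Aw>, i.e. A^T G + G A = 0. *)
Definition skew_adjoint (R : ringType) (n : nat) (G A : 'M[R]_n) : Prop :=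
  A^T *m G + G *m A = 0.

Definition pullback3 (R : ringType) (n : nat) (P : 'M[R]_n) (mu0 : form3 R n)
  : form3 R n :=
  fun a b c => \sum_(i < n) \sum_(j < n) \sum_(k < n) P i a * P j b * P k c * mu0 i j k.

(* Same algebraic type: mu = g . mu0 for some g in GL(V). *)
Definition same_type (R : comUnitRingType) (n : nat) (mu mu0 : form3 R n) : Prop :=
  exists P : 'M[R]_n, P \in unitmx /\ mu = pullback3 P mu0.

Definition basis_vec (R : ringType) (n : nat) (l : 'I_n) : 'rV[R]_n :=
  delta_mx 0 l.

(* A connection on the open set U of R^n (a coordinate chart), given by its
   Christoffel symbols: nabla_{e_i} e_j = sum_k Gam x k i j e_k. *)
Definition connection (R : Type) (n : nat) := 'rV[R]_n -> 'I_n -> 'I_n -> 'I_n -> R.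

Definition torsion_free (R : Type) (n : nat) (U : set 'rV[R]_n) (Gam : connection R n)
  : Prop := forall x, U x -> forall k i j, Gam x k i j = Gam x k j i.

Definition cov_deriv (R : realType) (n : nat) (Gam : connection R n)
  (mu : 'rV[R]_n -> form3 R n) (x : 'rV[R]_n) : 'I_n -> form3 R n :=
  fun l a b c =>
    'D_(basis_vec R l) (fun y => mu y a b c) x
    - \sum_(m < n) (Gam x m l a * mu x m b c + Gam x m l b * mu x a m c
                    + Gam x m l c * mu x a b m).

(* Main.v *)
Set Warnings "-all".
Require Import Defs.
From HB Require Import structures.
From mathcomp Require Import all_boot all_order all_algebra.
From mathcomp Require Import all_classical all_reals all_analysis.
From mathcomp Require Import ring lra.
Import Order.TTheory GRing.Theory Num.Theory.
Import numFieldNormedType.Exports.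
Local Open Scope ring_scope.
Local Open Scope classical_set_scope.
Set Implicit Arguments. Unset Strict Implicit. Unset Printing Implicit Defensive.

Definition act1 (R : realType) n (M : 'M[R]_n) (t : form3 R n) : form3 R n :=
  fun a b c => \sum_(i < n) M i a * t i b c.
Definition act2 (R : realType) n (M : 'M[R]_n) (t : form3 R n) : form3 R n :=
  fun a b c => \sum_(i < n) M i b * t a i c.
Definition act3 (R : realType) n (M : 'M[R]_n) (t : form3 R n) : form3 R n :=
  fun a b c => \sum_(i < n) M i c * t a b i.
Definition fadd (R : realType) n (t1 t2 : form3 R n) : form3 R n :=
  fun a b c => t1 a b c + t2 a b c.

Ltac fext := apply/funext => a; apply/funext => b; apply/funext => c.

Lemma act11 (R : realType) n (M N : 'M[R]_n) t :
  act1 M (act1 N t) = act1 (N *m M) t.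
Proof.
fext; rewrite /act1; under eq_bigr do rewrite big_distrr; rewrite exchange_big.
apply eq_bigr => j _; rewrite !mxE big_distrl; apply eq_bigr => i _ /=.
by rewrite mulrCA mulrA.
Qed.
Lemma act22 (R : realType) n (M N : 'M[R]_n) t :
  act2 M (act2 N t) = act2 (N *m M) t.
Proof.
fext; rewrite /act2; under eq_bigr do rewrite big_distrr; rewrite exchange_big.
apply eq_bigr => j _; rewrite !mxE big_distrl; apply eq_bigr => i _ /=.
by rewrite mulrCA mulrA.
Qed.
Lemma act33 (R : realType) n (M N : 'M[R]_n) t :
  act3 M (act3 N t) = act3 (N *m M) t.
Proof.
fext; rewrite /act3; under eq_bigr do rewrite big_distrr; rewrite exchange_big.
apply eq_bigr => j _; rewrite !mxE big_distrl; apply eq_bigr => i _ /=.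
by rewrite mulrCA mulrA.
Qed.
Lemma act12 (R : realType) n (M N : 'M[R]_n) t :
  act1 M (act2 N t) = act2 N (act1 M t).
Proof.
fext; rewrite /act1 /act2; under eq_bigr do rewrite big_distrr.
rewrite exchange_big; apply eq_bigr => j _; rewrite big_distrr.
by apply eq_bigr => i _ /=; rewrite mulrCA.
Qed.
Lemma act13 (R : realType) n (M N : 'M[R]_n) t :
  act1 M (act3 N t) = act3 N (act1 M t).
Proof.
fext; rewrite /act1 /act3; under eq_bigr do rewrite big_distrr.
rewrite exchange_big; apply eq_bigr => j _; rewrite big_distrr.
by apply eq_bigr => i _ /=; rewrite mulrCA.
Qed.
Lemma act23 (R : realType) n (M N : 'M[R]_n) t :
  act2 M (act3 N t) = act3 N (act2 M t).
Proof.
fext; rewrite /act2 /act3; under eq_bigr do rewrite big_distrr.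
rewrite exchange_big; apply eq_bigr => j _; rewrite big_distrr.
by apply eq_bigr => i _ /=; rewrite mulrCA.
Qed.
Lemma act1_1 (R : realType) n (t : form3 R n) : act1 1%:M t = t.
Proof.
fext; rewrite /act1 (bigD1 a) //= mxE eqxx mul1r big1 ?addr0 // => i /negbTE ne.
by rewrite mxE ne mul0r.
Qed.
Lemma act2_1 (R : realType) n (t : form3 R n) : act2 1%:M t = t.
Proof.
fext; rewrite /act2 (bigD1 b) //= mxE eqxx mul1r big1 ?addr0 // => i /negbTE ne.
by rewrite mxE ne mul0r.
Qed.
Lemma act3_1 (R : realType) n (t : form3 R n) : act3 1%:M t = t.
Proof.
fext; rewrite /act3 (bigD1 c) //= mxE eqxx mul1r big1 ?addr0 // => i /negbTE ne.
by rewrite mxE ne mul0r.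
Qed.
Lemma act1_add (R : realType) n M (t1 t2 : form3 R n) :
  act1 M (fadd t1 t2) = fadd (act1 M t1) (act1 M t2).
Proof. by fext; rewrite /act1 /fadd -big_split; apply eq_bigr => i _; rewrite mulrDr. Qed.
Lemma act2_add (R : realType) n M (t1 t2 : form3 R n) :
  act2 M (fadd t1 t2) = fadd (act2 M t1) (act2 M t2).
Proof. by fext; rewrite /act2 /fadd -big_split; apply eq_bigr => i _; rewrite mulrDr. Qed.
Lemma act3_add (R : realType) n M (t1 t2 : form3 R n) :
  act3 M (fadd t1 t2) = fadd (act3 M t1) (act3 M t2).
Proof. by fext; rewrite /act3 /fadd -big_split; apply eq_bigr => i _; rewrite mulrDr. Qed.
Lemma act1_0 (R : realType) n M : act1 M (fun _ _ _ => 0 : R) = (fun _ _ _ => 0 : R) :> form3 R n.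
Proof. by fext; rewrite /act1 big1 // => i _; rewrite mulr0. Qed.
Lemma act2_0 (R : realType) n M : act2 M (fun _ _ _ => 0 : R) = (fun _ _ _ => 0 : R) :> form3 R n.
Proof. by fext; rewrite /act2 big1 // => i _; rewrite mulr0. Qed.
Lemma act3_0 (R : realType) n M : act3 M (fun _ _ _ => 0 : R) = (fun _ _ _ => 0 : R) :> form3 R n.
Proof. by fext; rewrite /act3 big1 // => i _; rewrite mulr0. Qed.

Lemma pullbackE (R : realType) n (P : 'M[R]_n) t :
  pullback3 P t = act1 P (act2 P (act3 P t)).
Proof.
fext; rewrite /pullback3 /act1 /act2 /act3; apply eq_bigr => i _.
rewrite big_distrr; apply eq_bigr => j _ /=; rewrite !big_distrr; apply eq_bigr => k _ /=.
by rewrite !mulrA.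
Qed.
Lemma glE (R : realType) n (A : 'M[R]_n) t :
  gl_act A t = fadd (fadd (act1 A t) (act2 A t)) (act3 A t).
Proof. by fext; rewrite /gl_act /fadd /act1 /act2 /act3 -!big_split. Qed.
Lemma main_inj (R : realType) (n : nat) (U : set 'rV[R]_n)
  (mu : 'rV[R]_n -> form3 R n) (mu0 : form3 R n) :
  (forall x, U x -> same_type (mu x) mu0) ->
  (exists G : 'M[R]_n, pseudo_euclidean G /\
     forall A : 'M[R]_n, isotropy mu0 A -> skew_adjoint G A) ->
  forall Gam1 Gam2 : connection R n,
     torsion_free U Gam1 -> torsion_free U Gam2 ->
     (forall x, U x -> forall l a b c,
        \sum_(m < n) (Gam1 x m l a * mu x m b c + Gam1 x m l b * mu x a m c
                    + Gam1 x m l c * mu x a b m) =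
        \sum_(m < n) (Gam2 x m l a * mu x m b c + Gam2 x m l b * mu x a m c
                    + Gam2 x m l c * mu x a b m)) ->
     forall x, U x -> Gam1 x = Gam2 x.
Proof.
move=> Htype [G [[GT Gu] Hskew]] Gam1 Gam2 T1 T2 Hs x Ux.
have [P [Pu Pmu]] := Htype x Ux.
pose A l := \matrix_(m, a) (Gam1 x m l a - Gam2 x m l a).
have isoA : forall l, isotropy (mu x) (A l).
  move=> l; rewrite /isotropy; fext.
  rewrite /gl_act; transitivity (
    \sum_(m < n) (Gam1 x m l a * mu x m b c + Gam1 x m l b * mu x a m c
                    + Gam1 x m l c * mu x a b m) -
        \sum_(m < n) (Gam2 x m l a * mu x m b c + Gam2 x m l b * mu x a m c
                    + Gam2 x m l c * mu x a b m)); last by rewrite Hs // subrr.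
  rewrite -sumrB; apply eq_bigr => m _; rewrite !mxE; ring.
pose B l := P *m A l *m invmx P.
have BP : forall l, B l *m P = P *m A l by move=> l; rewrite /B mulmxKV.
have isoB : forall l, isotropy mu0 (B l).
  move=> l.
  have E : gl_act (A l) (mu x) = pullback3 P (gl_act (B l) mu0).
    rewrite Pmu !pullbackE !glE ?act3_add ?act2_add ?act1_add.
    congr (fadd (fadd _ _) _).
    - rewrite act11 -BP -act11; congr (act1 P _); by rewrite act12 act13.
    - rewrite -act12 act22 -BP -act22; congr (act1 P _); congr (act2 P _); by rewrite act23.
    - rewrite -act13 -act23 act33 -BP -act33 //.
  have H0 : pullback3 P (gl_act (B l) mu0) = (fun _ _ _ => 0) by rewrite -E; apply isoA.
  have := congr1 (fun t => act3 (invmx P) (act2 (invmx P) (act1 (invmx P) t))) H0.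
  rewrite /= pullbackE act11 mulmxV // act1_1 act22 mulmxV // act2_1 act33 mulmxV // act3_1.
  by rewrite act1_0 act2_0 act3_0.
pose Gp := P^T *m G *m P.
have GpT : Gp^T = Gp by rewrite /Gp !trmx_mul GT trmxK mulmxA.
have GpU : Gp \in unitmx by rewrite /Gp !unitmx_mul unitmx_tr Pu Gu.
have skA : forall l, (A l)^T *m Gp + Gp *m A l = 0.
  move=> l.
  have e1 : (A l)^T *m Gp = P^T *m ((B l)^T *m G) *m P.
    by rewrite /Gp !mulmxA -trmx_mul -(BP l) trmx_mul.
  have e2 : Gp *m A l = P^T *m (G *m B l) *m P.
    by rewrite /Gp -!mulmxA mulVmx // mulmx1.
  by rewrite e1 e2 -mulmxDl -mulmxDr Hskew // mulmx0 mul0mx.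
pose S l a b := (Gp *m A l) a b.
have anti : forall l a b, S l a b = - S l b a.
  move=> l a b; have := congr1 (fun M : 'M[R]_n => M b a) (skA l).
  have -> : (A l)^T *m Gp = (Gp *m A l)^T by rewrite trmx_mul GpT.
  move=> h; rewrite /S; apply/eqP; rewrite -addr_eq0; apply/eqP; move: h; by rewrite !mxE.
have sym : forall l a b, S l a b = S b a l.
  move=> l a b; rewrite /S !mxE; apply eq_bigr => m _; rewrite !mxE.
  by rewrite (T1 x Ux m l b) (T2 x Ux m l b).
have S0 : forall l a b, S l a b = 0.
  move=> l a b.
  have h : S l a b = - S l a b.
    rewrite {1}anti sym anti opprK sym anti sym //.
  lra.
have A0 : forall l, A l = 0.
  move=> l; have : Gp *m A l = 0 by apply/matrixP => a b; rewrite [RHS]mxE; exact: (S0 l a b).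
  by move=> h; rewrite -(mulKmx GpU (A l)) h mulmx0.
apply/funext => m; apply/funext => l; apply/funext => a.
have := congr1 (fun M : 'M[R]_n => M m a) (A0 l); rewrite !mxE => /eqP; rewrite subr_eq0 => /eqP //.
Qed.
Theorem lemma12p1 (R : realType) (n : nat) (U : set 'rV[R]_n)
  (mu : 'rV[R]_n -> form3 R n) (mu0 : form3 R n) :
  open U ->
  alternating3 mu0 ->
  (* algebraically constant, of the algebraic type of mu0 *)
  (forall x, U x -> same_type (mu x) mu0) ->
  (* the isotropy algebra of the type consists of skew-adjoint maps
     for some pseudo-Euclidean inner product *)
  (exists G : 'M[R]_n, pseudo_euclidean G /\
     forall A : 'M[R]_n, isotropy mu0 A -> skew_adjoint G A) ->
  (* injectivity of nabla |-> nabla mu on torsion-free connections *)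
  (forall Gam1 Gam2 : connection R n,
     torsion_free U Gam1 -> torsion_free U Gam2 ->
     (forall x, U x -> cov_deriv Gam1 mu x = cov_deriv Gam2 mu x) ->
     forall x, U x -> Gam1 x = Gam2 x)
  /\
  (* hence at most one torsion-free connection with nabla mu = 0 *)
  (forall Gam1 Gam2 : connection R n,
     torsion_free U Gam1 -> torsion_free U Gam2 ->
     (forall x, U x -> cov_deriv Gam1 mu x = (fun _ _ _ _ => 0)) ->
     (forall x, U x -> cov_deriv Gam2 mu x = (fun _ _ _ _ => 0)) ->
     forall x, U x -> Gam1 x = Gam2 x).
Proof.
move=> _ _ Ht Hg; split.
- move=> G1 G2 T1 T2 H; apply: (main_inj Ht Hg T1 T2) => x Ux l a b c.
  have := congr1 (fun f : 'I_n -> form3 R n => f l a b c) (H x Ux).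
  by rewrite /cov_deriv => /addrI /oppr_inj.
- move=> G1 G2 T1 T2 H1 H2; apply: (main_inj Ht Hg T1 T2) => x Ux l a b c.
  have := congr1 (fun f : 'I_n -> form3 R n => f l a b c) (H1 x Ux).
  have := congr1 (fun f : 'I_n -> form3 R n => f l a b c) (H2 x Ux).
  by rewrite /cov_deriv => /subr0_eq <- /subr0_eq <-.
Qed.
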